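(* Let $\alpha$ be a reduced operation sequence. (a) Any operation of $\alpha$ whose corresponding operations do not occupy a set of consecutive positions of $\alpha$ is fixed. (b) Any operation of $\alpha$ that corresponds to a fixed operation of $\alpha$ is fixed.
   Context: Operation sequences: $\sigma[a]$ ($a\ge1$) denotes pushing the top $a$ elements of the input stack, as a block with relative order unchanged, onto the top of a working stack; $\tau[b]$ ($b\ge1$) denotes moving the top $b$ elements of the working stack, as a block with relative order unchanged, onto the top of an output stack; $\sigma=\sigma[1]$, $\tau=\tau[1]$. A well-formed operation sequence is a word $\alpha=\alpha_1\cdots\alpha_m$ in these symbols such that in every prefix the total push size is at least the total pop size, with equality for the whole word; its size $n$ is the total push size. Acting on an input stack containing $1,\dots,n$ with $1$ on top, it produces the permutation read from the final output stack top to bottom. Two well-formed sequences are equivalent if they have the same size and produce the same permutation. $\alpha$ is reduced if every consecutive pair $\alpha_i\alpha_{i+1}$ with $\alpha_i$ a push and $\alpha_{i+1}$ a pop equals $\sigma[1]\tau[1]$. The vertices of $\alpha$ are $v_0=(0,0)$ and $v_i=v_{i-1}+(a,a)$ if $\alpha_i=\sigma[a]$, $v_i=v_{i-1}+(b,-b)$ if $\alpha_i=\tau[b]$. The support of a push (resp. pop) is the set of elements it places on (resp. removes from) the working stack when $\alpha$ acts on input $1,\dots,n$. A push and a pop correspond if their supports intersect (the operations corresponding to a push are pops, and vice versa). An operation $\alpha_i$ of a reduced sequence $\alpha$ is fixed if for every reduced sequence $\beta=\beta_1\cdots\beta_{m'}$ equivalent to $\alpha$, with vertices $w_0,\dots,w_{m'}$,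 there is $j$ with $w_{j-1}=v_{i-1}$ and $w_j=v_i$. *)

(* Defs.v *)
From mathcomp Require Import all_boot.
From mathcomp Require Import ssralg ssrint.
Set Implicit Arguments. Unset Strict Implicit. Unset Printing Implicit Defensive.

(* An operation: Push a = sigma[a], Pop b = tau[b]. *)
Inductive op := Push of nat | Pop of nat.

Definition is_push (o : op) : bool := if o is Push _ then true else false.
Definition is_pop (o : op) : bool := if o is Pop _ then true else false.
Definition op_size (o : op) : nat := match o with Push a => a | Pop b => b end.

(* Stacks are sequences with the head being the top. A state is
   (input stack, working stack, output stack). *)
Record state := State { inp : seq nat; work : seq nat; out : seq nat }.

Definition step (s : state) (o : op) : state :=
  match o with
  | Push a => State (drop a (inp s)) (take a (inp s) ++ work s) (out s)
  | Pop b => State (inp s) (drop b (work s)) (take b (work s) ++ out s)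
  end.

Definition run (s : state) (ops : seq op) : state := foldl step s ops.

Definition init (n : nat) : state := State (iota 1 n) [::] [::].

Definition push_total (ops : seq op) : nat :=
  sumn [seq (if o is Push a then a else 0) | o <- ops].
Definition pop_total (ops : seq op) : nat :=
  sumn [seq (if o is Pop b then b else 0) | o <- ops].

Definition seq_size (ops : seq op) : nat := push_total ops.

Definition well_formed (ops : seq op) : Prop :=
  (forall i, i < size ops -> 0 < op_size (nth (Push 0) ops i)) /\
  (forall k, pop_total (take k ops) <= push_total (take k ops)) /\
  pop_total ops = push_total ops.

(* the produced permutation, read from the output stack top to bottom *)
Definition produced (ops : seq op) : seq nat :=
  out (run (init (seq_size ops)) ops).

Definition equivalent (a b : seq op) : Prop :=
  [/\ well_formed a, well_formed b, seq_size a = seq_size b &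
      produced a = produced b].

(* Positions are 0-based: operation i is nth (Push 0) ops i, i < size ops. *)
Definition reduced (ops : seq op) : Prop :=
  well_formed ops /\
  forall i a b, i.+1 < size ops ->
    nth (Push 0) ops i = Push a -> nth (Push 0) ops i.+1 = Pop b ->
    a = 1 /\ b = 1.

(* vertex i = v_i, the vertex reached after the first i operations *)
Definition vadd (v : nat * int) (o : op) : nat * int :=
  match o with
  | Push a => (v.1 + a, v.2 + (a%:Z))%R
  | Pop b => (v.1 + b, v.2 - (b%:Z))%R
  end.

Definition vertex (ops : seq op) (i : nat) : nat * int :=
  foldl vadd (0, 0%R) (take i ops).

Definition support (ops : seq op) (i : nat) : seq nat :=
  let s := run (init (seq_size ops)) (take i ops) in
  match nth (Push 0) ops i with
  | Push a => take a (inp s)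
  | Pop b => take b (work s)
  end.

Definition corresponds (ops : seq op) (i j : nat) : Prop :=
  [/\ i < size ops, j < size ops,
      (is_push (nth (Push 0) ops i) && is_pop (nth (Push 0) ops j)) ||
      (is_pop (nth (Push 0) ops i) && is_push (nth (Push 0) ops j)) &
      exists x, x \in support ops i /\ x \in support ops j].

Definition fixed (ops : seq op) (i : nat) : Prop :=
  forall beta, reduced beta -> equivalent ops beta ->
    exists j, j < size beta /\ vertex beta j = vertex ops i /\
              vertex beta j.+1 = vertex ops i.+1.

Definition consecutive (P : nat -> Prop) : Prop :=
  forall j k l, j <= k -> k <= l -> P j -> P l -> P k.

(* Main.v *)
Require Import Defs.
From mathcomp Require Import all_boot.
From mathcomp Require Import ssralg ssrint.
From mathcomp Require Import zify.
From Stdlib Require Import Classical.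
Set Implicit Arguments. Unset Strict Implicit. Unset Printing Implicit Defensive.

Definition opn (s : seq op) k := nth (Push 0) s k.
Definition pp (s : seq op) k := push_total (take k s).
Definition qq (s : seq op) k := pop_total (take k s).
Definition nn (s : seq op) := seq_size s.
Definition st (s : seq op) k := run (init (nn s)) (take k s).
Definition pa (o : op) := if o is Push a then a else 0.
Definition pb (o : op) := if o is Pop b then b else 0.

Lemma push_total_rcons t o : push_total (rcons t o) = push_total t + pa o.
Proof. by rewrite /push_total map_rcons sumn_rcons. Qed.
Lemma pop_total_rcons t o : pop_total (rcons t o) = pop_total t + pb o.
Proof. by rewrite /pop_total map_rcons sumn_rcons. Qed.

Lemma pp_succ s k : k < size s -> pp s k.+1 = pp s k + pa (opn s k).
Proof. by move=> h; rewrite /pp (take_nth (Push 0) h) push_total_rcons. Qed.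
Lemma qq_succ s k : k < size s -> qq s k.+1 = qq s k + pb (opn s k).
Proof. by move=> h; rewrite /qq (take_nth (Push 0) h) pop_total_rcons. Qed.
Lemma st_succ s k : k < size s -> st s k.+1 = step (st s k) (opn s k).
Proof. by move=> h; rewrite /st (take_nth (Push 0) h) /run foldl_rcons. Qed.

Lemma pp_big s k : size s <= k -> pp s k = nn s.
Proof. by move=> h; rewrite /pp take_oversize. Qed.
Lemma qq_big s k : size s <= k -> qq s k = qq s (size s).
Proof. by move=> h; rewrite /qq !take_oversize. Qed.
Lemma st_big s k : size s <= k -> st s k = st s (size s).
Proof. by move=> h; rewrite /st !take_oversize. Qed.
Lemma pp0 s : pp s 0 = 0. Proof. by rewrite /pp take0. Qed.
Lemma qq0 s : qq s 0 = 0. Proof. by rewrite /qq take0. Qed.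

Lemma pp_mono s k l : k <= l -> pp s k <= pp s l.
Proof.
move=> /subnKC <-; elim: (l - k) => [|d IH]; first by rewrite addn0.
case: (ltnP (k + d) (size s)) => h.
  by rewrite addnS pp_succ //; apply: (leq_trans IH); apply: leq_addr.
by rewrite addnS (pp_big (leqW h)) -(pp_big h).
Qed.
Lemma qq_mono s k l : k <= l -> qq s k <= qq s l.
Proof.
move=> /subnKC <-; elim: (l - k) => [|d IH]; first by rewrite addn0.
case: (ltnP (k + d) (size s)) => h.
  by rewrite addnS qq_succ //; apply: (leq_trans IH); apply: leq_addr.
by rewrite addnS (qq_big (leqW h)) -(qq_big h).
Qed.
Lemma pp_le_nn s k : pp s k <= nn s.
Proof.
case: (leqP (size s) k) => h; first by rewrite pp_big.
by rewrite -(pp_big (leqnn (size s))); apply: pp_mono; apply: ltnW.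
Qed.


Lemma wf_pos s k : well_formed s -> k < size s -> 0 < op_size (opn s k).
Proof. by case=> h _ /h. Qed.
Lemma wf_pref s k : well_formed s -> qq s k <= pp s k.
Proof. by case=> _ [h _]; apply: h. Qed.
Lemma wf_tot s : well_formed s -> qq s (size s) = nn s.
Proof. by case=> _ [_ h]; rewrite /qq take_size h. Qed.

Lemma st0 s : st s 0 = init (nn s). Proof. by rewrite /st take0. Qed.

Lemma st_inp s k : inp (st s k) = drop (pp s k) (iota 1 (nn s)).
Proof.
elim: k => [|k IH]; first by rewrite st0 pp0 drop0.
case: (ltnP k (size s)) => h; last by rewrite (st_big (leqW h)) -(st_big h) IH (pp_big h) (pp_big (leqW h)).
rewrite st_succ // pp_succ //; case E: (opn s k) => [a|b] /=.
  by rewrite IH drop_drop addnC.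
by rewrite addn0.
Qed.

Lemma pp_step_le s k : k < size s -> pp s k + pa (opn s k) <= nn s.
Proof. by move=> h; rewrite -pp_succ //; apply: pp_le_nn. Qed.

Lemma push_take s k a : k < size s -> opn s k = Push a ->
  take a (inp (st s k)) = iota (pp s k).+1 a.
Proof.
move=> h E; have := pp_step_le h; rewrite E /= => le.
rewrite st_inp drop_iota take_iota; congr iota; lia.
Qed.

Lemma st_size s k : well_formed s ->
  size (work (st s k)) = pp s k - qq s k /\ size (out (st s k)) = qq s k.
Proof.
move=> wf; elim: k => [|k [IH1 IH2]]; first by rewrite st0 pp0 qq0.
case: (ltnP k (size s)) => h; last first.
  by rewrite (st_big (leqW h)) -(st_big h) (pp_big (leqW h)) -(pp_big h) (qq_big (leqW h)) -(qq_big h).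
have hpq := wf_pref k wf; have hpq' := wf_pref k.+1 wf.
rewrite st_succ // pp_succ // qq_succ // in hpq' *; case E: (opn s k) => [a|b] /=.
  rewrite size_cat (push_take h E) size_iota IH1 addn0; split=> //; lia.
rewrite E /= in hpq'.
rewrite size_drop size_cat size_take IH1 IH2 addn0.
case: ifP => hb; split; try lia.
Qed.

Lemma st_perm s k : well_formed s ->
  perm_eq (work (st s k) ++ out (st s k)) (iota 1 (pp s k)).
Proof.
move=> wf; elim: k => [|k IH]; first by rewrite st0 pp0.
case: (ltnP k (size s)) => h; last first.
  by rewrite (st_big (leqW h)) -(st_big h) (pp_big (leqW h)) -(pp_big h).
rewrite st_succ // pp_succ //; case E: (opn s k) => [a|b] /=.
  by rewrite (push_take h E) iotaD -catA perm_catC add1n perm_cat2r.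
rewrite addn0; apply: perm_trans IH.
by rewrite perm_catCA catA cat_take_drop.
Qed.

Lemma st_uniq s k : well_formed s -> uniq (work (st s k) ++ out (st s k)).
Proof. by move=> wf; rewrite (perm_uniq (st_perm k wf)) iota_uniq. Qed.

Lemma st_mem s k x : well_formed s ->
  (x \in work (st s k) ++ out (st s k)) = (0 < x <= pp s k).
Proof. by move=> wf; rewrite (perm_mem (st_perm k wf)) mem_iota add1n ltnS. Qed.

Definition inr s x := (0 < x) && (x <= nn s).

Definition pu s x := find (fun k => x <= pp s k.+1) (iota 0 (size s)).
Definition po s x := find (fun k => x \in out (st s k.+1)) (iota 0 (size s)).

Lemma size_pos s x : inr s x -> 0 < size s.
Proof.
case/andP=> h1 h2; case: s h2 => //=; rewrite /nn /seq_size /push_total /=.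
by move=> h; lia.
Qed.

Lemma pu_has s x : inr s x -> has (fun k => x <= pp s k.+1) (iota 0 (size s)).
Proof.
move=> hx; have sp := size_pos hx; apply/hasP; exists (size s).-1.
  by rewrite mem_iota; lia.
by rewrite prednK // (pp_big (leqnn _)); case/andP: hx.
Qed.

Lemma pu_lt s x : inr s x -> pu s x < size s.
Proof. by move=> hx; rewrite /pu -[X in _ < X](size_iota 0) -has_find (pu_has hx). Qed.

Lemma pu_hi s x : inr s x -> x <= pp s (pu s x).+1.
Proof.
move=> hx; have := nth_find 0 (pu_has hx); rewrite -/(pu s x) nth_iota //.
exact: pu_lt.
Qed.

Lemma pu_lo s x : inr s x -> pp s (pu s x) < x.
Proof.
move=> hx; case E: (pu s x) => [|k]; first by rewrite pp0; case/andP: hx.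
have : k < pu s x by rewrite E.
move=> /(before_find 0); rewrite nth_iota ?(ltn_trans _ (pu_lt hx)) ?E //.
by move/negbT; rewrite -ltnNge.
Qed.

Lemma pu_ltE s x k : inr s x -> (pu s x < k) = (x <= pp s k).
Proof.
move=> hx; apply/idP/idP => h.
  by apply: (leq_trans (pu_hi hx)); apply: pp_mono.
rewrite ltnNge; apply/negP => hk.
by have := leq_trans h (pp_mono s hk); rewrite leqNgt pu_lo.
Qed.

Lemma pu_mono s x y : inr s x -> inr s y -> x <= y -> pu s x <= pu s y.
Proof.
by move=> hx hy hxy; rewrite -ltnS pu_ltE //; apply: (leq_trans hxy); apply: pu_hi.
Qed.

Lemma pu_eqE s x k : inr s x -> (pu s x == k) = (pp s k < x <= pp s k.+1).
Proof.
move=> hx; have e1 := pu_ltE k.+1 hx; have e2 := pu_ltE k hx.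
rewrite ltnS in e1; rewrite eqn_leq e1 [k <= _]leqNgt e2 -ltnNge.
by rewrite andbC.
Qed.

Lemma pu_push s x : inr s x -> exists a, opn s (pu s x) = Push a /\ 
  pp s (pu s x).+1 = pp s (pu s x) + a.
Proof.
move=> hx; have h1 := pu_lo hx; have h2 := pu_hi hx.
rewrite pp_succ ?pu_lt // in h2 *; case: (opn s (pu s x)) h2 => [a|b] /= h2.
  by exists a.
by rewrite addn0 in h2; lia.
Qed.

Lemma out_step s k x : x \in out (st s k) -> x \in out (st s k.+1).
Proof.
case: (ltnP k (size s)) => h; last by rewrite (st_big (leqW h)) -(st_big h).
by rewrite st_succ //; case: (opn s k) => [a|b] //= hx; rewrite mem_cat hx orbT.
Qed.

Lemma out_mono s k l x : k <= l -> x \in out (st s k) -> x \in out (st s l).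
Proof.
move=> /subnKC <-; elim: (l - k) => [|d IH]; first by rewrite addn0.
by move=> hx; rewrite addnS; apply: out_step; apply: IH.
Qed.

Lemma out_final s x : well_formed s -> inr s x -> x \in out (st s (size s)).
Proof.
move=> wf hx; have [h1 _] := st_size (size s) wf.
rewrite (pp_big (leqnn _)) (wf_tot wf) subnn in h1.
have := st_mem (size s) x wf; rewrite (pp_big (leqnn _)) -/(inr s x) hx.
by move/size0nil: h1 => ->.
Qed.

Lemma po_has s x : well_formed s -> inr s x ->
  has (fun k => x \in out (st s k.+1)) (iota 0 (size s)).
Proof.
move=> wf hx; have sp := size_pos hx; apply/hasP; exists (size s).-1.
  by rewrite mem_iota; lia.
by rewrite prednK //; apply: out_final.
Qed.

Lemma po_lt s x : well_formed s -> inr s x -> po s x < size s.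
Proof. by move=> wf hx; rewrite /po -[X in _ < X](size_iota 0) -has_find (po_has wf hx). Qed.

Lemma po_in s x : well_formed s -> inr s x -> x \in out (st s (po s x).+1).
Proof.
move=> wf hx; have := nth_find 0 (po_has wf hx); rewrite -/(po s x) nth_iota //.
exact: po_lt.
Qed.

Lemma po_notin s x : well_formed s -> inr s x -> x \notin out (st s (po s x)).
Proof.
move=> wf hx; case E: (po s x) => [|k]; first by rewrite st0.
have : k < po s x by rewrite E.
move=> /(before_find 0); rewrite nth_iota ?(ltn_trans _ (po_lt wf hx)) ?E //.
by move/negbT.
Qed.

Lemma out_iff s x k : well_formed s -> inr s x -> (x \in out (st s k)) = (po s x < k).
Proof.
move=> wf hx; apply/idP/idP => h.
  rewrite ltnNge; apply/negP => hk.
  by have := out_mono hk h; rewrite (negPf (po_notin wf hx)).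
exact: out_mono h (po_in wf hx).
Qed.

Lemma work_iff s x k : well_formed s -> inr s x ->
  (x \in work (st s k)) = (pu s x < k) && (k <= po s x).
Proof.
move=> wf hx; have u := st_uniq k wf; have m := st_mem k x wf.
rewrite mem_cat in m; rewrite pu_ltE // [k <= _]leqNgt -(out_iff _ wf hx).
case/andP: hx => hx1 hx2; rewrite hx1 /= in m; rewrite -m.
case hw: (x \in work (st s k)); case ho: (x \in out (st s k)) => //=.
by rewrite cat_uniq in u; case/and3P: u => _ /hasP []; exists x.
Qed.

Lemma sorted_catI (T : eqType) (r : rel T) s1 s2 : sorted r s1 -> sorted r s2 ->
  (forall x y, x \in s1 -> y \in s2 -> r x y) -> sorted r (s1 ++ s2).
Proof.
case: s1 => [|x s1] //= h1 h2 h; rewrite cat_path h1 /=.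
case: s2 h2 h => [|y s2] //= h2 h; rewrite h2 andbT; apply: h => //.
  exact: mem_last.
by rewrite inE eqxx.
Qed.

Definition srel s x z := (pu s z < pu s x) || ((pu s x == pu s z) && (x < z)).
Definition krel s x z := (po s z < po s x) || ((po s x == po s z) && srel s x z).

Lemma srel_trans s : transitive (srel s).
Proof.
move=> y x z; rewrite /srel; case/orP=> [h1|/andP [/eqP h1 h1']]; case/orP=> [h2|/andP [/eqP h2 h2']].
- by rewrite (ltn_trans h2 h1).
- by rewrite -h2 h1.
- by rewrite h1 h2.
- by rewrite h1 h2 eqxx (ltn_trans h1' h2') orbT.
Qed.
Lemma srel_irr s x : srel s x x = false.
Proof. by rewrite /srel ltnn eqxx ltnn. Qed.
Lemma srel_asym s x z : srel s x z -> srel s z x = false.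
Proof.
rewrite /srel; case/orP=> [h|/andP [/eqP h h']].
  by rewrite ltnNge (ltnW h) /= eq_sym (gtn_eqF h).
by rewrite h ltnn eqxx /= ltnNge (ltnW h').
Qed.
Lemma srel_total s x z : x != z -> srel s x z || srel s z x.
Proof.
rewrite /srel => nxz; case: (ltngtP (pu s x) (pu s z)) => h; rewrite ?h ?orbT //.
by rewrite /=; case: (ltngtP x z) nxz => //= ->; rewrite ?orbT.
Qed.

Lemma krel_trans s : transitive (krel s).
Proof.
move=> y x z; rewrite /krel; case/orP=> [h1|/andP [/eqP h1 h1']]; case/orP=> [h2|/andP [/eqP h2 h2']].
- by rewrite (ltn_trans h2 h1).
- by rewrite -h2 h1.
- by rewrite h1 h2.
- by rewrite h1 h2 eqxx (srel_trans h1' h2') orbT.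
Qed.
Lemma krel_irr s x : krel s x x = false.
Proof. by rewrite /krel ltnn eqxx srel_irr. Qed.
Lemma krel_asym s x z : krel s x z -> krel s z x = false.
Proof.
rewrite /krel; case/orP=> [h|/andP [/eqP h h']].
  by rewrite ltnNge (ltnW h) /= eq_sym (gtn_eqF h).
by rewrite h ltnn eqxx /= srel_asym.
Qed.
Lemma krel_total s x z : x != z -> krel s x z || krel s z x.
Proof.
rewrite /krel => nxz; case: (ltngtP (po s x) (po s z)) => h; rewrite ?h ?orbT //.
by rewrite /=; apply: srel_total.
Qed.

Lemma work_inr s k x : well_formed s -> x \in work (st s k) -> inr s x.
Proof.
move=> wf hx; have := st_mem k x wf; rewrite mem_cat hx /= => /esym/andP [h1 h2].
by rewrite /inr h1 (leq_trans h2 (pp_le_nn _ _)).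
Qed.
Lemma out_inr s k x : well_formed s -> x \in out (st s k) -> inr s x.
Proof.
move=> wf hx; have := st_mem k x wf; rewrite mem_cat hx orbT => /esym/andP [h1 h2].
by rewrite /inr h1 (leq_trans h2 (pp_le_nn _ _)).
Qed.

Lemma work_sorted s k : well_formed s -> sorted (srel s) (work (st s k)).
Proof.
move=> wf; elim: k => [|k IH]; first by rewrite st0.
case: (ltnP k (size s)) => h; last by rewrite (st_big (leqW h)) -(st_big h).
rewrite st_succ //; case E: (opn s k) => [a|b] /=; last exact: drop_sorted.
have le := pp_step_le h; rewrite E /= in le.
have inI y : y \in iota (pp s k).+1 a -> inr s y /\ pu s y = k.
  rewrite mem_iota => /andP [h1 h2]; have hy : inr s y by rewrite /inr; apply/andP; split; lia.
  split=> //; apply/eqP; rewrite pu_eqE // pp_succ // E /=; apply/andP; split; lia.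
rewrite (push_take h E); apply: sorted_catI => //.
- apply: (@sub_in_sorted _ (fun y => y \in iota (pp s k).+1 a) ltn).
  + move=> x y hx hy /= hxy; rewrite /srel (inI _ hx).2 (inI _ hy).2 eqxx hxy orbT //.
  + by apply/allP.
  + exact: iota_ltn_sorted.
- move=> x y hx hy; rewrite /srel (inI _ hx).2.
  have hy' := work_inr wf hy; rewrite (work_iff _ wf hy') in hy.
  by case/andP: hy => ->.
Qed.

Lemma sorted_index (T : eqType) (r : rel T) (l : seq T) x z :
  transitive r -> (forall y, r y y = false) -> (forall y w, r y w -> r w y = false) ->
  sorted r l -> uniq l -> x \in l -> z \in l -> r x z -> index x l < index z l.
Proof.
move=> tr irr asym so u hx hz rxz.
case: (ltngtP (index x l) (index z l)) => // h.
  have := sorted_ltn_nth tr x so; rewrite /prop_in2 => H.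
  have := H (index z l) (index x l); rewrite !inE !index_mem hx hz => /(_ isT isT h).
  by rewrite !nth_index // asym.
by have := congr1 (nth x l) h; rewrite !nth_index // => exz; subst; rewrite irr in rxz.
Qed.

Lemma popstep s k x : well_formed s -> inr s x -> k < size s -> po s x = k ->
  exists b, opn s k = Pop b /\ x \in take b (work (st s k)).
Proof.
move=> wf hx h E.
have h1 : x \in out (st s k.+1) by rewrite out_iff // E.
have h2 : x \notin out (st s k) by rewrite out_iff // E ltnn.
rewrite st_succ // in h1; case: (opn s k) h1 => [a|b] /= h1; first by rewrite h1 in h2.
by exists b; rewrite mem_cat (negPf h2) orbF in h1.
Qed.

Lemma popstep_inv s k b x : well_formed s -> k < size s -> opn s k = Pop b ->
  x \in take b (work (st s k)) -> inr s x /\ po s x = k.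
Proof.
move=> wf h E hx; have hw := mem_take hx; have hi := work_inr wf hw.
split=> //; rewrite (work_iff _ wf hi) in hw; case/andP: hw => _ hk.
have : x \in out (st s k.+1) by rewrite st_succ // E /= mem_cat hx.
by rewrite (out_iff _ wf hi) ltnS => hk'; apply/eqP; rewrite eqn_leq hk' hk.
Qed.

Lemma out_sorted s k : well_formed s -> sorted (krel s) (out (st s k)).
Proof.
move=> wf; elim: k => [|k IH]; first by rewrite st0.
case: (ltnP k (size s)) => h; last by rewrite (st_big (leqW h)) -(st_big h).
rewrite st_succ //; case E: (opn s k) => [a|b] //=.
apply: sorted_catI => //.
- apply: (@sub_in_sorted _ (fun y => y \in take b (work (st s k))) (srel s)).
  + move=> x y hx hy /= hxy; rewrite /krel (popstep_inv wf h E hx).2 (popstep_inv wf h E hy).2.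
    by rewrite eqxx hxy orbT.
  + by apply/allP.
  + exact/take_sorted/work_sorted.
- move=> x y hx hy; rewrite /krel (popstep_inv wf h E hx).2.
  by rewrite -(out_iff _ wf (out_inr wf hy)) hy.
Qed.

Lemma produced_eq s : produced s = out (st s (size s)).
Proof. by rewrite /produced /st take_size. Qed.

Lemma key_order s x z : well_formed s -> inr s x -> inr s z ->
  (index x (produced s) < index z (produced s)) = krel s x z.
Proof.
move=> wf hx hz; rewrite produced_eq.
have u : uniq (out (st s (size s))) by have := st_uniq (size s) wf; rewrite cat_uniq => /and3P [].
have ix := out_final wf hx; have iz := out_final wf hz.
apply/idP/idP => h; last exact: (sorted_index (@krel_trans s) (@krel_irr s) (@krel_asym s) (out_sorted _ wf) u ix iz h).
case: (eqVneq x z) => [exz|nxz]; first by subst; rewrite ltnn in h.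
case/orP: (krel_total s nxz) => // hzx.
have := sorted_index (@krel_trans s) (@krel_irr s) (@krel_asym s) (out_sorted _ wf) u iz ix hzx.
by rewrite ltnNge (ltnW h).
Qed.

Lemma po_pop s x : well_formed s -> inr s x ->
  exists b, opn s (po s x) = Pop b /\ x \in take b (work (st s (po s x))).
Proof. by move=> wf hx; apply: popstep => //; apply: po_lt. Qed.

Lemma pu_lt_po s x : well_formed s -> inr s x -> pu s x < po s x.
Proof.
move=> wf hx; case: (po_pop wf hx) => b [_ /mem_take].
by rewrite (work_iff _ wf hx) => /andP [].
Qed.

Lemma lifo s x z : well_formed s -> inr s x -> inr s z ->
  pu s z < po s x -> srel s z x -> po s z <= po s x.
Proof.
move=> wf hx hz h1 h2; case: (ltnP (po s z) (po s x)) => [/ltnW //|h3].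
case: (po_pop wf hx) => b [E hb].
have hzw : z \in work (st s (po s x)) by rewrite (work_iff _ wf hz) h1 h3.
have u : uniq (work (st s (po s x))) by have := st_uniq (po s x) wf; rewrite cat_uniq => /and3P [].
have hxw := mem_take hb.
have := sorted_index (@srel_trans s) (@srel_irr s) (@srel_asym s) (work_sorted _ wf) u hzw hxw h2.
rewrite (in_take _ hxw) in hb => hi.
have hzt : z \in take b (work (st s (po s x))) by rewrite (in_take _ hzw) (ltn_trans hi hb).
by rewrite (popstep_inv wf (po_lt wf hx) E hzt).2.
Qed.

Lemma pu_po_neq s x y : well_formed s -> inr s x -> inr s y -> pu s x != po s y.
Proof.
move=> wf hx hy; case: (pu_push hx) => a [E _]; case: (po_pop wf hy) => b [E' _].
by apply/eqP => e; rewrite e E' in E.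
Qed.

Lemma mem_support_push s k a x : well_formed s -> k < size s -> opn s k = Push a ->
  (x \in Defs.support s k) = inr s x && (pu s x == k).
Proof.
move=> wf h E; rewrite /Defs.support -/(opn s k) E -/(st s k) (push_take h E) mem_iota.
have le := pp_step_le h; rewrite E /= in le.
apply/idP/idP.
  move=> /andP [h1 h2]; have hx : inr s x by rewrite /inr; apply/andP; split; lia.
  by rewrite hx pu_eqE // pp_succ // E /=; apply/andP; split; lia.
case/andP=> hx; rewrite pu_eqE // pp_succ // E /= => /andP [h1 h2]; apply/andP; split; lia.
Qed.

Lemma mem_support_pop s k b x : well_formed s -> k < size s -> opn s k = Pop b ->
  (x \in Defs.support s k) = inr s x && (po s x == k).
Proof.
move=> wf h E; rewrite /Defs.support -/(opn s k) E -/(st s k).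
apply/idP/idP.
  by move=> hx; have [h1 h2] := popstep_inv wf h E hx; rewrite h1 h2 eqxx.
case/andP=> hx /eqP e; case: (popstep wf hx h e) => b' [E' hb].
by rewrite E in E'; case: E' => ->.
Qed.

Lemma peak s k : reduced s -> k.+1 < size s -> ~~ is_pop (opn s k) -> is_pop (opn s k.+1) ->
  opn s k = Push 1 /\ opn s k.+1 = Pop 1 /\ inr s (pp s k).+1 /\
  pu s (pp s k).+1 = k /\ po s (pp s k).+1 = k.+1.
Proof.
case=> wf red h hn hp.
case E: (opn s k) hn => [a|a'] // _.
case E': (opn s k.+1) hp => [b'|b] // _.
case: (red _ _ _ h E E') => ea eb; subst a b.
have hk : k < size s by apply: ltnW.
have le := pp_step_le hk; rewrite E /= in le.
have hx : inr s (pp s k).+1.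
  by rewrite /inr; apply/andP; split; lia.
have hpu : pu s (pp s k).+1 = k.
  by apply/eqP; rewrite pu_eqE // pp_succ // E /=; apply/andP; split; lia.
do 4!split => //; apply/eqP.
have := mem_support_pop (pp s k).+1 wf h E'.
rewrite hx /= => <-; rewrite /Defs.support -/(opn s k.+1) E' -/(st s k.+1) st_succ // E /=.
by rewrite -/(st s k) (push_take hk E) /= inE eqxx.
Qed.

Lemma push_elem s k a : well_formed s -> k < size s -> opn s k = Push a ->
  inr s (pp s k).+1 /\ pu s (pp s k).+1 = k.
Proof.
move=> wf h E; have le := pp_step_le h; rewrite E /= in le.
have := wf_pos wf h; rewrite E /= => ha.
have hx : inr s (pp s k).+1 by rewrite /inr; apply/andP; split; lia.
by split=> //; apply/eqP; rewrite pu_eqE // pp_succ // E /=; apply/andP; split; lia.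
Qed.

Lemma pop_elem s k b : well_formed s -> k < size s -> opn s k = Pop b ->
  exists z, inr s z /\ po s z = k.
Proof.
move=> wf h E; have := wf_pos wf h; rewrite E /= => hb.
have hp := wf_pref k.+1 wf; rewrite pp_succ // qq_succ // E /= addn0 in hp.
have [sz _] := st_size k wf.
case Ew: (work (st s k)) sz => [|w0 w] /= sz; first by lia.
have hin : w0 \in take b (work (st s k)).
  by rewrite Ew; move: hb; clear; case: b => //= b _; rewrite inE eqxx.
by exists w0; apply: (popstep_inv wf h E hin).
Qed.

Lemma vertexE s k : vertex s k = (pp s k + qq s k, (pp s k)%:Z - (qq s k)%:Z)%R.
Proof.
elim: k => [|k IH]; first by rewrite /vertex take0 pp0 qq0.
case: (ltnP k (size s)) => h; last first.
  have e : vertex s k.+1 = vertex s k by rewrite /vertex !take_oversize // (leqW h).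
  by rewrite e IH (pp_big h) (pp_big (leqW h)) (qq_big h) (qq_big (leqW h)).
rewrite /vertex (take_nth (Push 0) h) foldl_rcons -/(vertex s k) IH pp_succ // qq_succ // -/(opn s k).
case: (opn s k) => [a|b] /=; congr pair; rewrite ?addn0; try lia.
Qed.

Lemma out_suffix s k l : k <= l -> exists X, out (st s l) = X ++ out (st s k).
Proof.
move=> /subnKC <-; elim: (l - k) => [|d IH]; first by exists [::]; rewrite addn0.
case: IH => X HX; rewrite addnS.
case: (ltnP (k + d) (size s)) => h; last by exists X; rewrite (st_big (leqW h)) -(st_big h).
rewrite st_succ //; case: (opn s (k + d)) => [a|b] /=; first by exists X.
by exists (take b (work (st s (k + d))) ++ X); rewrite HX catA.
Qed.

Lemma out_drop s k : well_formed s -> out (st s k) = drop (nn s - qq s k) (produced s).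
Proof.
move=> wf; case: (leqP k (size s)) => h; last by rewrite st_big ?(ltnW h) // qq_big ?(ltnW h) // (wf_tot wf) subnn drop0 produced_eq.
case: (out_suffix s h) => X HX; rewrite produced_eq HX.
have [_ s1] := st_size (size s) wf; have [_ s2] := st_size k wf.
rewrite HX size_cat s2 (wf_tot wf) in s1.
have -> : nn s - qq s k = size X by lia.
by rewrite drop_size_cat.
Qed.

Lemma qq_count s k : well_formed s -> qq s k = count (fun w => po s w < k) (iota 1 (nn s)).
Proof.
move=> wf; have [_ <-] := st_size k wf; rewrite -size_filter; apply: perm_size.
apply: uniq_perm.
- by have := st_uniq k wf; rewrite cat_uniq => /and3P [].
- by apply: filter_uniq; apply: iota_uniq.
move=> w; rewrite mem_filter mem_iota add1n ltnS.
case hw: (0 < w <= nn s).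
  by rewrite andbT; apply: out_iff.
by rewrite andbF; apply/negP => /(out_inr wf); rewrite /inr hw.
Qed.

Lemma pop1_unique s k y y' : well_formed s -> inr s y -> inr s y' -> k < size s ->
  opn s k = Pop 1 -> po s y = k -> po s y' = k -> y = y'.
Proof.
move=> wf hy hy' h E e e'; case: (popstep wf hy h e) => b [E1 h1].
case: (popstep wf hy' h e') => b' [E2 h2].
rewrite E in E1 E2; case: E1 => <- in h1; case: E2 => <- in h2.
case: (work (st s k)) h1 h2 => //= w0 w; rewrite take0 !inE => /eqP -> /eqP ->; done.
Qed.

Definition prec s x z := index x (produced s) < index z (produced s).
Definition Sp s w x := all (fun y => prec s y w) [seq y <- iota 1 (nn s) | x <= y].

Lemma prec_irr s x : prec s x x = false. Proof. by rewrite /prec ltnn. Qed.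
Lemma prec_asym s x z : prec s x z -> prec s z x = false.
Proof. by rewrite /prec => h; rewrite ltnNge (ltnW h). Qed.

Lemma S_lemma s w x : reduced s -> inr s w -> inr s x -> (po s w < pu s x) = Sp s w x.
Proof.
move=> red hw hx; have wf := red.1.
apply/idP/idP => h.
  apply/allP => y; rewrite mem_filter mem_iota add1n ltnS => /andP [hxy hy].
  have hy' : inr s y by [].
  rewrite /prec key_order // /krel; apply/orP; left.
  apply: (leq_trans h); apply: (leq_trans (pu_mono hx hy' hxy)); apply: ltnW.
  exact: pu_lt_po.
move: h; apply: contraTT; rewrite -leqNgt leq_eqVlt (negPf (pu_po_neq wf hx hw)) /= => h.
have ex : exists k, (pu s x < k) && is_pop (opn s k) && (k < size s).
  exists (po s w); case: (po_pop wf hw) => b [E _]; rewrite E h /=.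
  exact: po_lt.
case: (ex_minnP ex) => k0 /andP [/andP [h1 h2] h3] hmin.
have k0pos : 0 < k0 by lia.
have hk : (k0.-1).+1 < size s by rewrite prednK.
have hnp : ~~ is_pop (opn s k0.-1).
  case: (ltngtP (pu s x) k0.-1) => c; first last.
  - by rewrite -c; case: (pu_push hx) => a [-> _].
  - by lia.
  apply/negP => hp; have := hmin k0.-1; rewrite c hp /= => /(_ (ltnW hk)).
  by lia.
have hp0 : is_pop (opn s k0.-1.+1) by rewrite prednK.
have [E1 [E2 [he [pue poe]]]] := peak red hk hnp hp0.
set e := (pp s k0.-1).+1 in he pue poe.
have hxe : x <= e.
  rewrite leqNgt; apply/negP => c.
  have := pu_mono he hx (ltnW c); rewrite pue => c2.
  have c3 : pu s x = k0.-1 by lia.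
  have := pu_hi hx; rewrite c3 pp_succ ?(ltnW hk) // E1 /= => c4.
  by rewrite /e in c; lia.
have hwk : k0 <= po s w.
  apply: hmin; case: (po_pop wf hw) => b [E _]; rewrite E h /=.
  exact: po_lt.
have ein : e \in [seq y <- iota 1 (nn s) | x <= y].
  by rewrite mem_filter mem_iota add1n ltnS hxe.
case: (eqVneq w e) => [ewe|nwe].
  apply/negP => /allP /(_ _ ein); rewrite -ewe prec_irr //.
apply/negP => /allP /(_ _ ein); rewrite /prec key_order // /krel poe.
case: (ltngtP (po s w) k0) hwk => // c _.
  by case/orP => [c'|/andP [/eqP c' _]]; lia.
have E2' : opn s k0 = Pop 1 by rewrite -(prednK k0pos).
have poe' : po s e = k0 by rewrite poe prednK.
by have := pop1_unique wf hw he h3 E2' c poe'; move/eqP; rewrite (negPf nwe).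
Qed.

Definition EQ a b := [/\ reduced a, reduced b, nn a = nn b & produced a = produced b].

Ltac clean := repeat match goal with
 | H : EQ _ _ |- _ => clear H
 | H : well_formed _ |- _ => clear H
 | H : reduced _ |- _ => clear H
 | H : is_true (inr _ _) |- _ => clear H
 | H : is_true (krel _ _ _) |- _ => clear H
 | H : is_true (srel _ _ _) |- _ => clear H
 | H : forall _, _ |- _ => clear H
 | H : is_true ((_ == _) != (_ == _)) |- _ => clear H
 | H : is_true (~~ ((_ == _) == (_ == _))) |- _ => clear H
 end.
Ltac clia := clean; lia.

Lemma EQ_sym a b : EQ a b -> EQ b a.
Proof. by case=> h1 h2 h3 h4; split. Qed.
Lemma EQ_wf1 a b : EQ a b -> well_formed a. Proof. by case=> [[]]. Qed.
Lemma EQ_wf2 a b : EQ a b -> well_formed b. Proof. by case=> _ [] . Qed.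
Lemma EQ_inr a b x : EQ a b -> inr a x = inr b x.
Proof. by case=> _ _ e _; rewrite /inr e. Qed.
Lemma EQ_prec a b x z : EQ a b -> prec a x z = prec b x z.
Proof. by case=> _ _ _ e; rewrite /prec e. Qed.
Lemma EQ_krel a b x z : EQ a b -> inr a x -> inr a z -> krel a x z = krel b x z.
Proof.
move=> h hx hz; have wa := EQ_wf1 h; have wb := EQ_wf2 h.
rewrite -key_order // -(key_order wb); rewrite -?(EQ_inr _ h) //.
exact: (EQ_prec _ _ h).
Qed.
Lemma EQ_D a b w x : EQ a b -> inr a w -> inr a x -> (po a w < pu a x) = (po b w < pu b x).
Proof.
move=> h hw hx; case: (h) => ra rb e1 e2.
rewrite S_lemma // S_lemma -?(EQ_inr _ h) //.
by rewrite /Sp /prec e1 e2.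
Qed.

Lemma lifo' s x z : well_formed s -> inr s x -> inr s z ->
  pu s z < po s x -> srel s z x -> po s z <= po s x.
Proof. exact: lifo. Qed.

Lemma L1 s1 s2 x y : EQ s1 s2 -> inr s1 x -> inr s1 y -> x < y ->
  pu s1 x = pu s1 y -> pu s2 x != pu s2 y -> (po s1 x == po s1 y) = (po s2 x != po s2 y).
Proof.
move=> h hx hy xy e1 n2; have w1 := EQ_wf1 h; have w2 := EQ_wf2 h.
have hx2 : inr s2 x by rewrite -(EQ_inr _ h).
have hy2 : inr s2 y by rewrite -(EQ_inr _ h).
have p2 : pu s2 x < pu s2 y by rewrite ltn_neqAle n2 pu_mono // ltnW.
have D := EQ_D h hx hy; rewrite -e1 ltnNge (ltnW (pu_lt_po w1 hx)) /= in D.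
have D2 : pu s2 y < po s2 x.
  by rewrite ltn_neqAle (pu_po_neq w2 hy2 hx2) leqNgt -D.
have l2 := lifo w2 hx2 hy2 D2 (introT orP (or_introl p2)).
have l1 : po s1 x <= po s1 y.
  apply: (lifo w1 hy hx); first by rewrite e1; apply: pu_lt_po.
  by rewrite /srel e1 eqxx xy orbT.
have := EQ_krel h hx hy; rewrite /krel /srel e1 eqxx xy ltnn /=.
rewrite !andbT (ltnNge (pu s2 y)) (ltnW p2) (negPf n2) /= andbF orbF.
rewrite [po s1 y < _]ltnNge l1 /= => ->.
by rewrite neq_ltn [po s2 x < _]ltnNge l2.
Qed.

Lemma L2 s1 s2 x y : EQ s1 s2 -> inr s1 x -> inr s1 y -> x != y ->
  po s1 x = po s1 y -> po s2 x != po s2 y -> prec s1 x y ->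
  (pu s1 x == pu s1 y) = (pu s2 x != pu s2 y).
Proof.
move=> h hx hy nxy e1 n2 pr; have w1 := EQ_wf1 h; have w2 := EQ_wf2 h.
have hx2 : inr s2 x by rewrite -(EQ_inr _ h).
have hy2 : inr s2 y by rewrite -(EQ_inr _ h).
have D := EQ_D h hy hx; rewrite -e1 ltnNge (ltnW (pu_lt_po w1 hx)) /= in D.
have D2 : pu s2 x < po s2 y.
  by rewrite ltn_neqAle (pu_po_neq w2 hx2 hy2) leqNgt -D.
have k2 : krel s2 x y by rewrite -(key_order w2) // -/(prec s2 x y) -(EQ_prec _ _ h).
have k1 : krel s1 x y by rewrite -(key_order w1).
have p2 : po s2 y < po s2 x.
  by move: k2; rewrite /krel (negPf n2) andFb orbF.
have sr1 : srel s1 x y by move: k1; rewrite /krel e1 ltnn eqxx.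
have sr2 : srel s2 y x.
  case/orP: (srel_total s2 nxy) => // c.
  by have := lifo w2 hy2 hx2 D2 c; rewrite leqNgt p2.
case: (ltngtP x y) nxy => // c _.
  have q1 : pu s1 x <= pu s1 y by apply: pu_mono => //; apply: ltnW.
  have q2 : pu s2 x <= pu s2 y by apply: pu_mono => //; apply: ltnW.
  move: sr1 sr2; rewrite /srel.
  move=> /orP [t|/andP [t _]]; first by lia.
  move=> /orP [t'|/andP [_ t']]; last by lia.
  by rewrite t neq_ltn t'.
have q1 : pu s1 y <= pu s1 x by apply: pu_mono => //; apply: ltnW.
have q2 : pu s2 y <= pu s2 x by apply: pu_mono => //; apply: ltnW.
move: sr1 sr2; rewrite /srel.
move=> /orP [t|/andP [_ t]]; last by lia.
move=> /orP [t'|/andP [t' _]]; first by lia.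
by rewrite (gtn_eqF t) eq_sym t'.
Qed.

Lemma flipE s1 s2 x y : EQ s1 s2 -> inr s1 x -> inr s1 y ->
  ((pu s1 x == pu s1 y) == (pu s2 x == pu s2 y)) =
  ((po s1 x == po s1 y) == (po s2 x == po s2 y)).
Proof.
move=> h hx hy; case: (eqVneq x y) => [<-|nxy]; first by rewrite !eqxx.
have h' := EQ_sym h; have w1 := EQ_wf1 h.
have hx2 : inr s2 x by rewrite -(EQ_inr _ h).
have hy2 : inr s2 y by rewrite -(EQ_inr _ h).
have A : forall t1 t2, EQ t1 t2 -> inr t1 x -> inr t1 y -> pu t1 x = pu t1 y -> pu t2 x != pu t2 y ->
    (po t1 x == po t1 y) = (po t2 x != po t2 y).
  move=> t1 t2 ht hx' hy' e n; case: (ltngtP x y) nxy => // c _; first exact: L1.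
  by rewrite eq_sym [po t2 x == _]eq_sym; apply: L1 => //; rewrite eq_sym.
have B : forall t1 t2, EQ t1 t2 -> inr t1 x -> inr t1 y -> po t1 x = po t1 y -> po t2 x != po t2 y ->
    (pu t1 x == pu t1 y) = (pu t2 x != pu t2 y).
  move=> t1 t2 ht hx' hy' e n; have wt := EQ_wf1 ht.
  have : prec t1 x y || prec t1 y x by rewrite /prec !key_order //; apply: krel_total.
  case/orP => p; first exact: L2.
  by rewrite eq_sym [pu t2 x == _]eq_sym; apply: L2 => //; rewrite eq_sym.
case e1: (pu s1 x == pu s1 y); case e2: (pu s2 x == pu s2 y);
  case f1: (po s1 x == po s1 y); case f2: (po s2 x == po s2 y) => //=.
all: try by have := A _ _ h hx hy (eqP e1) (negbT e2); rewrite f1 f2.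
all: try by have := A _ _ h' hx2 hy2 (eqP e2) (negbT e1); rewrite f1 f2.
all: try by have := B _ _ h hx hy (eqP f1) (negbT f2); rewrite e1 e2.
all: try by have := B _ _ h' hx2 hy2 (eqP f2) (negbT f1); rewrite e1 e2.
Qed.

Lemma flip_ne s1 s2 x y : EQ s1 s2 -> inr s1 x -> inr s1 y ->
  ((pu s1 x == pu s1 y) != (pu s2 x == pu s2 y)) ->
  ((po s1 x == po s1 y) != (po s2 x == po s2 y)).
Proof. by move=> h hx hy; rewrite (flipE h hx hy). Qed.
Lemma flip_ne' s1 s2 x y : EQ s1 s2 -> inr s1 x -> inr s1 y ->
  ((po s1 x == po s1 y) != (po s2 x == po s2 y)) ->
  ((pu s1 x == pu s1 y) != (pu s2 x == pu s2 y)).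
Proof. by move=> h hx hy; rewrite (flipE h hx hy). Qed.

Lemma krel_tr s1 s2 x z : EQ s1 s2 -> inr s1 x -> inr s1 z -> krel s1 x z -> krel s2 x z.
Proof. by move=> h hx hz; rewrite (EQ_krel h hx hz). Qed.

Lemma core_push s1 s2 a b z : EQ s1 s2 -> inr s1 a -> inr s1 b -> inr s1 z ->
  pu s1 a = pu s1 b -> po s1 a < po s1 z -> po s1 z < po s1 b -> po s1 a < pu s1 z ->
  forall y, inr s1 y -> (pu s1 y == pu s1 a) = (pu s2 y == pu s2 a).
Proof.
move=> h ha hb hz e1 az zb az'.
have w1 := EQ_wf1 h; have w2 := EQ_wf2 h.
have ha2 : inr s2 a by rewrite -(EQ_inr _ h).
have hb2 : inr s2 b by rewrite -(EQ_inr _ h).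
have hz2 : inr s2 z by rewrite -(EQ_inr _ h).
have ab : a < b.
  case: (ltngtP a b) => // c.
    have p1 : pu s1 b < po s1 a by rewrite -e1; apply: pu_lt_po.
    have p2 : srel s1 b a by rewrite /srel e1 eqxx c orbT.
    by have := lifo w1 ha hb p1 p2; clia.
  by move: az zb; rewrite c; clia.
have D : po s2 a < pu s2 z by rewrite -(EQ_D h ha hz).
have pz2 := pu_lt_po w2 hz2.
have kbz := krel_tr h hb hz (introT orP (or_introl zb)).
have e2 : pu s2 a = pu s2 b.
  apply/eqP; apply/negP => n.
  have := L1 h ha hb ab e1 (introT negP n); rewrite (ltn_eqF (ltn_trans az zb)).
  move/esym/negbFE/eqP => e.
  by move: kbz; rewrite /krel -e; move=> /orP [c|/andP [/eqP c _]]; clia.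
have ab2 : po s2 a < po s2 b.
  have := krel_tr h hb ha (introT orP (or_introl (ltn_trans az zb))).
  rewrite /krel /srel e2 ltnn eqxx /=.
  by move=> /orP [//|/andP [_ c]]; clia.
have zb2 : po s2 z < po s2 b.
  move: kbz; rewrite /krel /srel; move=> /orP [//|/andP [_ /orP [c|/andP [/eqP c _]]]].
    have := pu_lt_po w2 ha2; clia.
  have := pu_lt_po w2 ha2; clia.
move=> y hy; have hy2 : inr s2 y by rewrite -(EQ_inr _ h).
case: (eqVneq (pu s1 y == pu s1 a) (pu s2 y == pu s2 a)) => [//|nf].
have fa := flip_ne h hy ha nf.
have fb : (po s1 y == po s1 b) != (po s2 y == po s2 b) by apply: flip_ne => //; rewrite -e1 -e2.
case: (eqVneq (po s1 y) (po s1 a)) fa fb => c1; case: (eqVneq (po s2 y) (po s2 a)) => c2 //=;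
  case: (eqVneq (po s1 y) (po s1 b)) => c3; case: (eqVneq (po s2 y) (po s2 b)) => c4 //= _ _; try clia.
- have kzy : krel s1 z y by rewrite /krel c1 az.
  have := krel_tr h hz hy kzy.
  by rewrite /krel c4; move=> /orP [c|/andP [/eqP c _]]; clia.
- have kyz : krel s1 y z by rewrite /krel c3 zb.
  have := krel_tr h hy hz kyz.
  by rewrite /krel c2; move=> /orP [c|/andP [/eqP c _]]; clia.
Qed.

Lemma pu_lt_inv s x y : inr s x -> inr s y -> pu s x < pu s y -> x < y.
Proof.
move=> hx hy h; rewrite ltnNge; apply/negP => c.
by have := pu_mono hy hx c; rewrite leqNgt h.
Qed.

Lemma core_pop s1 s2 a b z : EQ s1 s2 -> inr s1 a -> inr s1 b -> inr s1 z ->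
  pu s1 a < pu s1 z -> pu s1 z < pu s1 b -> po s1 a = po s1 b -> po s1 z < pu s1 b ->
  forall y, inr s1 y -> (po s1 y == po s1 a) = (po s2 y == po s2 a).
Proof.
move=> h ha hb hz az zb e1 zb'.
have w1 := EQ_wf1 h; have w2 := EQ_wf2 h.
have ha2 : inr s2 a by rewrite -(EQ_inr _ h).
have hb2 : inr s2 b by rewrite -(EQ_inr _ h).
have hz2 : inr s2 z by rewrite -(EQ_inr _ h).
have az1 := pu_lt_inv ha hz az; have zb1 := pu_lt_inv hz hb zb.
have D1 : pu s2 b < po s2 a.
  have := EQ_D h ha hb; rewrite e1 ltnNge (ltnW (pu_lt_po w1 hb)) /= => D.
  by rewrite ltn_neqAle (pu_po_neq w2 hb2 ha2) leqNgt -D.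
have Dz : po s2 z < pu s2 b by rewrite -(EQ_D h hz hb).
have pz2 := pu_lt_po w2 hz2.
have m2 := pu_mono ha2 hz2 (ltnW az1).
have ab2 : pu s2 a < pu s2 b by clia.
have l2 := lifo w2 ha2 hb2 D1 (introT orP (or_introl ab2)).
have kba : krel s1 b a by rewrite /krel e1 eqxx ltnn /srel (ltn_trans az zb).
have e2 : po s2 a = po s2 b.
  move: (krel_tr h hb ha kba); rewrite /krel; move=> /orP [c|/andP [/eqP c _]]; clia.
move=> y hy; have hy2 : inr s2 y by rewrite -(EQ_inr _ h).
case: (eqVneq (po s1 y == po s1 a) (po s2 y == po s2 a)) => [//|nf].
have fa := flip_ne' h hy ha nf.
have fb : (pu s1 y == pu s1 b) != (pu s2 y == pu s2 b) by apply: flip_ne' => //; rewrite -e1 -e2.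
case: (eqVneq (pu s1 y) (pu s1 a)) fa fb => c1; case: (eqVneq (pu s2 y) (pu s2 a)) => c2 //=;
  case: (eqVneq (pu s1 y) (pu s1 b)) => c3; case: (eqVneq (pu s2 y) (pu s2 b)) => c4 //= _ _; try clia.
- have yz : y < z by apply: (pu_lt_inv hy hz); rewrite c1.
  have zy : z < y by apply: (pu_lt_inv hz2 hy2); rewrite c4; clia.
  lia.
- have zy : z < y by apply: (pu_lt_inv hz hy); rewrite c3.
  have m3 := pu_mono hz2 hy2 (ltnW zy).
  have ez : pu s2 z = pu s2 a by clia.
  have p1 : pu s2 a < po s2 z by rewrite -ez.
  have p2 : srel s2 a z by rewrite /srel ez eqxx az1 orbT.
  have := lifo w2 hz2 ha2 p1 p2; clia.
Qed.

Lemma pp_popped s k b : reduced s -> k < size s -> opn s k = Pop b ->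
  inr s (pp s k) /\ po s (pp s k) <= k.
Proof.
move=> red h E; have wf := red.1.
have hb := wf_pos wf h; rewrite E /= in hb.
have hp := wf_pref k.+1 wf; rewrite pp_succ // qq_succ // E /= addn0 in hp.
have he : inr s (pp s k) by rewrite /inr (pp_le_nn s k) andbT; clia.
split=> //.
set e := pp s k in he hp *.
have k1lt : pu s e < k by rewrite pu_ltE.
have hi := pu_hi he.
have hpop : is_pop (opn s (pu s e).+1).
  case: (ltngtP (pu s e).+1 k) k1lt => // c _; last by rewrite c E.
  have m1 := pp_mono s c; rewrite pp_succ ?(ltn_trans c h) // in m1.
  have hsz := wf_pos wf (ltn_trans c h).
  by case: (opn s (pu s e).+1) m1 hsz => [a|b'] //= m1 hsz; rewrite /e in m1 hi; clia.
have hnp : ~~ is_pop (opn s (pu s e)) by case: (pu_push he) => a [-> _].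
have hk : (pu s e).+1 < size s by apply: (leq_ltn_trans _ h).
have [E1 [E2 [hx [pux pox]]]] := peak red hk hnp hpop.
have ee : e = (pp s (pu s e)).+1.
  have := pu_lo he; rewrite pp_succ ?(ltnW hk) // E1 /= in hi; clia.
by rewrite {1}ee pox.
Qed.

Lemma sameop_push s1 s2 k k' a a' : EQ s1 s2 -> k < size s1 -> k' < size s2 ->
  opn s1 k = Push a -> opn s2 k' = Push a' ->
  (forall y, inr s1 y -> (pu s1 y == k) = (pu s2 y == k')) ->
  vertex s2 k' = vertex s1 k /\ vertex s2 k'.+1 = vertex s1 k.+1.
Proof.
move=> h h1 h2 E1 E2 H; have w1 := EQ_wf1 h; have w2 := EQ_wf2 h.
have [hx pux] := push_elem w1 h1 E1; have [hx' pux'] := push_elem w2 h2 E2.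
have hx1' : inr s1 (pp s2 k').+1 by rewrite (EQ_inr _ h).
have hx2 : inr s2 (pp s1 k).+1 by rewrite -(EQ_inr _ h).
have q1 : pu s2 (pp s1 k).+1 = k' by apply/eqP; rewrite -H // pux.
have q2 : pu s1 (pp s2 k').+1 = k by apply/eqP; rewrite H // pux'.
have ep : pp s1 k = pp s2 k'.
  have := pu_lo hx2; have := pu_lo hx1'; rewrite q1 q2; clia.
have a1 := wf_pos w1 h1; have a2 := wf_pos w2 h2; rewrite E1 /= in a1; rewrite E2 /= in a2.
have s1e := pp_succ h1; have s2e := pp_succ h2; rewrite E1 /= in s1e; rewrite E2 /= in s2e.
have hy1 : inr s1 (pp s1 k.+1) by rewrite /inr pp_le_nn; clia.
have hy2 : inr s2 (pp s2 k'.+1) by rewrite /inr pp_le_nn; clia.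
have hy1' : inr s2 (pp s1 k.+1) by rewrite -(EQ_inr _ h).
have hy2' : inr s1 (pp s2 k'.+1) by rewrite (EQ_inr _ h).
have r1 : pu s1 (pp s1 k.+1) = k by apply/eqP; rewrite pu_eqE //; clia.
have r2 : pu s2 (pp s2 k'.+1) = k' by apply/eqP; rewrite pu_eqE //; clia.
have r1' : pu s2 (pp s1 k.+1) = k' by apply/eqP; rewrite -H // r1.
have r2' : pu s1 (pp s2 k'.+1) = k by apply/eqP; rewrite H // r2.
have ep' : pp s1 k.+1 = pp s2 k'.+1.
  have := pu_hi hy1'; have := pu_hi hy2'; rewrite r1' r2'; clia.
have en : nn s2 = nn s1 by case: h => _ _ ->.
have eq : qq s1 k = qq s2 k'.
  rewrite !qq_count // en.
  apply: eq_in_count => w; rewrite mem_iota add1n ltnS => hw.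
  by rewrite /= -{1}pux -{1}q1 (EQ_D h hw hx).
have eq' : qq s1 k.+1 = qq s2 k'.+1 by rewrite !qq_succ // E1 E2 /= eq.
by rewrite !vertexE ep ep' eq eq'.
Qed.


Lemma sameop_pop s1 s2 k k' b b' : EQ s1 s2 -> k < size s1 -> k' < size s2 ->
  opn s1 k = Pop b -> opn s2 k' = Pop b' ->
  (forall y, inr s1 y -> (po s1 y == k) = (po s2 y == k')) ->
  vertex s2 k' = vertex s1 k /\ vertex s2 k'.+1 = vertex s1 k.+1.
Proof.
move=> h h1 h2 E1 E2 H; have w1 := EQ_wf1 h; have w2 := EQ_wf2 h.
have h' := EQ_sym h.
have [c [hc pc]] := pop_elem w1 h1 E1.
have pc2 : po s2 c = k' by apply/eqP; rewrite -H // pc.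
have hc2 : inr s2 c by rewrite -(EQ_inr _ h).
have PW : forall w, inr s1 w -> (po s1 w < k) = (po s2 w < k').
  move=> w hw; have hw2 : inr s2 w by rewrite -(EQ_inr _ h).
  have X : forall s t kk, well_formed s -> inr s t -> inr s w -> po s t = kk ->
      (po s w < kk) = (po s w != kk) && krel s t w.
    move=> s t kk ws ht hw' <-; rewrite /krel.
    by case: (ltngtP (po s w) (po s t)).
  rewrite (X _ _ _ w1 hc hw pc) (X _ _ _ w2 hc2 hw2 pc2) (EQ_krel h hc hw).
  by rewrite H.
have PW' : forall w, inr s1 w -> (po s1 w < k.+1) = (po s2 w < k'.+1).
  by move=> w hw; rewrite !ltnS [po s1 w <= k]leq_eqVlt [po s2 w <= k']leq_eqVlt PW // H.
have en : nn s2 = nn s1 by case: h => _ _ ->.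
have eq : qq s1 k = qq s2 k'.
  rewrite !qq_count // en; apply: eq_in_count => w; rewrite mem_iota add1n ltnS => hw.
  exact: PW.
have eq' : qq s1 k.+1 = qq s2 k'.+1.
  rewrite !qq_count // en; apply: eq_in_count => w; rewrite mem_iota add1n ltnS => hw.
  exact: PW'.
case: (h) => r1 r2 _ _.
have [he1 pe1] := pp_popped r1 h1 E1.
have [he2 pe2] := pp_popped r2 h2 E2.
have ep : pp s1 k = pp s2 k'.
  have he1' : inr s2 (pp s1 k) by rewrite -(EQ_inr _ h).
  have he2' : inr s1 (pp s2 k') by rewrite (EQ_inr _ h).
  have x1 : po s2 (pp s1 k) < k'.+1 by rewrite -PW' // ltnS.
  have x2 : po s1 (pp s2 k') < k.+1 by rewrite PW' // ltnS.
  have y1 := pu_lt_po w2 he1'; have y2 := pu_lt_po w1 he2'.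
  have z1 : pu s2 (pp s1 k) < k' by clia.
  have z2 : pu s1 (pp s2 k') < k by clia.
  rewrite pu_ltE // in z1; rewrite pu_ltE // in z2; clia.
have ep' : pp s1 k.+1 = pp s2 k'.+1 by rewrite !pp_succ // E1 E2 /= ep.
by rewrite !vertexE ep ep' eq eq'.
Qed.

Lemma vertex_split s1 s2 k k' : vertex s2 k' = vertex s1 k -> pp s2 k' = pp s1 k /\ qq s2 k' = qq s1 k.
Proof. by rewrite !vertexE => [[e1 e2]]; split; clia. Qed.

Lemma edge_push s1 s2 k k' a : EQ s1 s2 -> k < size s1 -> k' < size s2 ->
  opn s1 k = Push a -> vertex s2 k' = vertex s1 k -> vertex s2 k'.+1 = vertex s1 k.+1 ->
  exists a', opn s2 k' = Push a' /\ forall y, inr s1 y -> (pu s1 y == k) = (pu s2 y == k').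
Proof.
move=> h h1 h2 E V1 V2; have w1 := EQ_wf1 h; have w2 := EQ_wf2 h.
have [p1 q1] := vertex_split V1; have [p2 q2] := vertex_split V2.
have a1 := wf_pos w1 h1; rewrite E /= in a1.
have s1e := pp_succ h1; rewrite E /= in s1e.
have s2e := pp_succ h2.
case E2: (opn s2 k') s2e => [a'|b'] /= s2e; last by clia.
exists a'; split=> // y hy; have hy2 : inr s2 y by rewrite -(EQ_inr _ h).
by rewrite !pu_eqE // p1 p2.
Qed.

Lemma edge_pop s1 s2 k k' b : EQ s1 s2 -> k < size s1 -> k' < size s2 ->
  opn s1 k = Pop b -> vertex s2 k' = vertex s1 k -> vertex s2 k'.+1 = vertex s1 k.+1 ->
  exists b', opn s2 k' = Pop b' /\ forall y, inr s1 y -> (po s1 y == k) = (po s2 y == k').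
Proof.
move=> h h1 h2 E V1 V2; have w1 := EQ_wf1 h; have w2 := EQ_wf2 h.
have [p1 q1] := vertex_split V1; have [p2 q2] := vertex_split V2.
have a1 := wf_pos w1 h1; rewrite E /= in a1.
have s1e := qq_succ h1; rewrite E /= in s1e.
have s2e := qq_succ h2.
case E2: (opn s2 k') s2e => [a'|b'] /= s2e; first by clia.
exists b'; split=> // y hy; have hy2 : inr s2 y by rewrite -(EQ_inr _ h).
have en : nn s2 = nn s1 by case: h => _ _ ->.
have ep : produced s2 = produced s1 by case: h => _ _ _ ->.
have T : forall s kk, well_formed s -> inr s y -> (po s y == kk) =
    (y \in drop (nn s - qq s kk.+1) (produced s)) && (y \notin drop (nn s - qq s kk) (produced s)).
  move=> s kk ws hys; rewrite -!out_drop // !out_iff //.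
  apply/idP/idP => [/eqP ->|/andP [u1 u2]]; first by rewrite ltnS leqnn ltnn.
  by rewrite eqn_leq -ltnS u1 leqNgt u2.
by rewrite (T _ _ w1 hy) (T _ _ w2 hy2) en ep q2 q1.
Qed.

Lemma not_consec (P : nat -> Prop) : ~ consecutive P ->
  exists j k l, [/\ j <= k, k <= l, P j, P l & ~ P k].
Proof.
move=> nc; apply: NNPP => H; apply: nc => j k l h1 h2 pj pl.
by apply: NNPP => npk; apply: H; exists j, k, l; split.
Qed.

Lemma corr_dec s i j : well_formed s -> corresponds s i j ->
  exists x, inr s x /\
   ((exists a, exists b, opn s i = Push a /\ opn s j = Pop b /\ pu s x = i /\ po s x = j) \/
    (exists a, exists b, opn s i = Pop b /\ opn s j = Push a /\ po s x = i /\ pu s x = j)).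
Proof.
move=> wf [hi hj ty [x [xi xj]]]; exists x.
move: ty xi xj; rewrite -/(opn s i) -/(opn s j).
case Ei: (opn s i) => [a|b]; case Ej: (opn s j) => [a'|b'] //= _.
  rewrite (mem_support_push _ wf hi Ei) (mem_support_pop _ wf hj Ej).
  case/andP=> hx /eqP e1 /andP [_ /eqP e2]; split=> //; left; exists a, b'; done.
rewrite (mem_support_pop _ wf hi Ei) (mem_support_push _ wf hj Ej).
case/andP=> hx /eqP e1 /andP [_ /eqP e2]; split=> //; right; exists a', b; done.
Qed.

Lemma corr_mk1 s i k a b x : well_formed s -> i < size s -> k < size s ->
  opn s i = Push a -> opn s k = Pop b -> inr s x -> pu s x = i -> po s x = k ->
  corresponds s i k.
Proof.
move=> wf hi hk Ei Ek hx e1 e2; split=> //.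
  by rewrite -/(opn s i) -/(opn s k) Ei Ek.
exists x; rewrite (mem_support_push _ wf hi Ei) (mem_support_pop _ wf hk Ek).
by rewrite hx e1 e2 !eqxx.
Qed.

Lemma corr_mk2 s i k a b x : well_formed s -> i < size s -> k < size s ->
  opn s i = Pop b -> opn s k = Push a -> inr s x -> po s x = i -> pu s x = k ->
  corresponds s i k.
Proof.
move=> wf hi hk Ei Ek hx e1 e2; split=> //.
  by rewrite -/(opn s i) -/(opn s k) Ei Ek.
exists x; rewrite (mem_support_pop _ wf hi Ei) (mem_support_push _ wf hk Ek).
by rewrite hx e1 e2 !eqxx.
Qed.

Lemma equiv_EQ a b : reduced a -> reduced b -> equivalent a b -> EQ a b.
Proof. by move=> ra rb [_ _ e1 e2]; split. Qed.

Lemma inr_iota s y : (y \in iota 1 (nn s)) = inr s y.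
Proof. by rewrite mem_iota add1n ltnS. Qed.

Lemma part_a_push s i a : reduced s -> i < size s -> opn s i = Push a ->
  ~ consecutive (fun j => corresponds s i j) -> fixed s i.
Proof.
move=> red hi E nc beta rb eqv; have h := equiv_EQ red rb eqv.
have wf := EQ_wf1 h; have w2 := EQ_wf2 h.
case: (not_consec nc) => j [k [l [hjk hkl Pj Pl nPk]]].
have dec : forall t, corresponds s i t -> exists x, inr s x /\ pu s x = i /\ po s x = t.
  move=> t /(corr_dec wf) [x [hx [[a' [b' [_ [_ [e1 e2]]]]]|[a' [b' [E' _]]]]]].
    by exists x.
  by rewrite E in E'.
case: (dec _ Pj) => x1 [hx1 [pux1 pox1]].
case: (dec _ Pl) => x2 [hx2 [pux2 pox2]].
have jk : j < k by rewrite ltn_neqAle hjk andbT; apply/eqP => ejk; apply: nPk; rewrite -ejk.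
have kl : k < l by rewrite ltn_neqAle hkl andbT; apply/eqP => ekl; apply: nPk; rewrite ekl.
have ij : i < j by rewrite -pux1 -pox1; apply: pu_lt_po.
pose Q t := (k < t) && has (fun y => (pu s y == i) && (po s y == t)) (iota 1 (nn s)).
have exQ : exists t, Q t.
  exists l; rewrite /Q kl /=; apply/hasP; exists x2; first by rewrite inr_iota.
  by rewrite pux2 pox2 !eqxx.
case: (ex_minnP exQ) => t0 /andP [kt0 /hasP [b bin /andP [/eqP pub /eqP pob]]] tmin.
have hb : inr s b by rewrite -inr_iota.
have t0s : t0 < size s by rewrite -pob; apply: po_lt.
have t0p : 0 < t0 by clia.
have hk1 : (t0.-1).+1 < size s by rewrite prednK.
have hpt0 : is_pop (opn s t0.-1.+1) by rewrite prednK //; case: (po_pop wf hb) => c [E' _]; rewrite -pob E'.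
have hkp : is_pop (opn s t0.-1).
  apply/negPn/negP => np.
  have [E1 [E2 [he [pue poe]]]] := peak red hk1 np hpt0.
  rewrite prednK // in E2 poe.
  have := pop1_unique wf hb he t0s E2 pob poe => eb.
  by move: pue; rewrite -eb pub; clia.
case Ek': (opn s t0.-1) hkp => [//|c] _.
have hk' : t0.-1 < size s by clia.
case: (pop_elem wf hk' Ek') => z [hz poz].
have nzi : pu s z != i.
  apply/eqP => pzi; case: (eqVneq t0.-1 k) => ek.
    by apply: nPk; rewrite -ek; apply: (corr_mk1 wf hi hk' E Ek' hz pzi poz).
  have : Q t0.-1.
    rewrite /Q; apply/andP; split; first by clia.
    by apply/hasP; exists z; rewrite ?inr_iota // pzi poz !eqxx.
  by move/tmin; clia.
have xz : po s x1 < pu s z.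
  case: (ltngtP (po s x1) (pu s z)) => // c1; last first.
    by move: (pu_po_neq wf hz hx1); rewrite c1 eqxx.
  case: (ltngtP (pu s z) i) nzi => // c2 _.
    have p1 : pu s b < po s z by rewrite pub poz; clia.
    have p2 : srel s b z by rewrite /srel pub c2.
    by have := lifo wf hz hb p1 p2; rewrite poz pob; clia.
  have p2 : srel s z x1 by rewrite /srel pux1 c2.
  by have := lifo wf hx1 hz c1 p2; rewrite poz pox1; clia.
have q1 : po s x1 < po s z by rewrite pox1 poz; clia.
have q2 : po s z < po s b by rewrite poz pob; clia.
have CP := core_push h hx1 hb hz (etrans pux1 (esym pub)) q1 q2 xz.
have hx1b : inr beta x1 by rewrite -(EQ_inr _ h).
case: (pu_push hx1b) => a2 [E2 _].
exists (pu beta x1); split; first exact: pu_lt.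
apply: (sameop_push h hi (pu_lt hx1b) E E2) => y hy.
by rewrite -pux1 CP.
Qed.

Lemma part_a_pop s i c : reduced s -> i < size s -> opn s i = Pop c ->
  ~ consecutive (fun j => corresponds s i j) -> fixed s i.
Proof.
move=> red hi E nc beta rb eqv; have h := equiv_EQ red rb eqv.
have wf := EQ_wf1 h; have w2 := EQ_wf2 h.
case: (not_consec nc) => j [k [l [hjk hkl Pj Pl nPk]]].
have dec : forall t, corresponds s i t -> exists x, inr s x /\ po s x = i /\ pu s x = t.
  move=> t /(corr_dec wf) [x [hx [[a' [b' [E' _]]]|[a' [b' [_ [_ [e1 e2]]]]]]]].
    by rewrite E in E'.
  by exists x.
case: (dec _ Pj) => x1 [hx1 [pox1 pux1]].
case: (dec _ Pl) => x2 [hx2 [pox2 pux2]].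
have jk : j < k by rewrite ltn_neqAle hjk andbT; apply/eqP => ejk; apply: nPk; rewrite -ejk.
have kl : k < l by rewrite ltn_neqAle hkl andbT; apply/eqP => ekl; apply: nPk; rewrite ekl.
have li : l < i by rewrite -pux2 -pox2; apply: pu_lt_po.
pose Q t := (t < k) && has (fun y => (po s y == i) && (pu s y == t)) (iota 1 (nn s)).
have exQ : exists t, Q t.
  exists j; rewrite /Q jk /=; apply/hasP; exists x1; first by rewrite inr_iota.
  by rewrite pux1 pox1 !eqxx.
have ubQ : forall t, Q t -> t <= k by move=> t /andP [/ltnW].
case: (ex_maxnP exQ ubQ) => t0 /andP [t0k /hasP [a ain /andP [/eqP poa /eqP pua]]] tmax.
have ha : inr s a by rewrite -inr_iota.
have t1s : t0.+1 < size s by clia.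
have hnp : ~~ is_pop (opn s t0) by rewrite -pua; case: (pu_push ha) => d [-> _].
have hkp : ~~ is_pop (opn s t0.+1).
  apply/negP => hp.
  have [E1 [E2 [he [pue poe]]]] := peak red t1s hnp hp.
  have ea : a = (pp s t0).+1.
    have := pu_lo ha; have := pu_hi ha; rewrite pua pp_succ ?(ltnW t1s) // E1 /=; clia.
  by move: poe; rewrite -ea poa; clia.
case Ek': (opn s t0.+1) hkp => [d|//] _.
have [hz puz] := push_elem wf t1s Ek'.
set z := (pp s t0.+1).+1 in hz puz.
have nzi : po s z != i.
  apply/eqP => pzi; case: (eqVneq t0.+1 k) => ek.
    by apply: nPk; rewrite -ek; apply: (corr_mk2 wf hi t1s E Ek' hz pzi puz).
  have : Q t0.+1.
    rewrite /Q; apply/andP; split; first by clia.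
    by apply/hasP; exists z; rewrite ?inr_iota // pzi puz !eqxx.
  by move/tmax; clia.
have zi : po s z < i.
  have p1 : pu s z < po s a by rewrite puz poa; clia.
  have p2 : srel s z a by rewrite /srel puz pua ltnSn.
  have := lifo wf ha hz p1 p2; rewrite poa => q.
  by rewrite ltn_neqAle nzi q.
have zb : po s z < pu s x2.
  case: (ltngtP (po s z) (pu s x2)) => // c1.
    have p2 : srel s x2 z by rewrite /srel puz pux2; apply/orP; left; clia.
    by have := lifo wf hz hx2 c1 p2; rewrite pox2; clia.
  by move: (pu_po_neq wf hx2 hz); rewrite c1 eqxx.
have q1 : pu s a < pu s z by rewrite pua puz.
have q2 : pu s z < pu s x2 by rewrite puz pux2; clia.
have CP := core_pop h ha hx2 hz q1 q2 (etrans poa (esym pox2)) zb.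
have hab : inr beta a by rewrite -(EQ_inr _ h).
case: (po_pop w2 hab) => b2 [E2 _].
exists (po beta a); split; first exact: po_lt.
apply: (sameop_pop h hi (po_lt w2 hab) E E2) => y hy.
by rewrite -poa CP.
Qed.

Lemma part_b s i j : reduced s -> corresponds s i j -> fixed s j -> fixed s i.
Proof.
move=> red cij fj beta rb eqv; have h := equiv_EQ red rb eqv.
have wf := EQ_wf1 h; have w2 := EQ_wf2 h.
case: (cij) => hi hj _ _.
case: (fj beta rb eqv) => k' [hk' [V1 V2]].
case: (corr_dec wf cij) => x [hx [[a [b [Ei [Ej [pux pox]]]]]|[a [b [Ei [Ej [pox pux]]]]]]].
- case: (edge_pop h hj hk' Ej V1 V2) => b' [Eb H].
  have pob : po beta x = k' by apply/eqP; rewrite -H // pox.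
  have hxb : inr beta x by rewrite -(EQ_inr _ h).
  have CP : forall y, inr s y -> (pu s y == i) = (pu beta y == pu beta x).
    move=> y hy; have := flipE h hy hx; rewrite pox pob H // eqxx -pux.
    by case: (pu s y == pu s x); case: (pu beta y == pu beta x).
  case: (pu_push hxb) => a2 [E2 _].
  exists (pu beta x); split; first exact: pu_lt.
  exact: (sameop_push h hi (pu_lt hxb) Ei E2).
- case: (edge_push h hj hk' Ej V1 V2) => a' [Ea H].
  have pub : pu beta x = k' by apply/eqP; rewrite -H // pux.
  have hxb : inr beta x by rewrite -(EQ_inr _ h).
  have CP : forall y, inr s y -> (po s y == i) = (po beta y == po beta x).
    move=> y hy; have := flipE h hy hx; rewrite pux pub H // eqxx -pox.
    by case: (po s y == po s x); case: (po beta y == po beta x).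
  case: (po_pop w2 hxb) => b2 [E2 _].
  exists (po beta x); split; first exact: po_lt.
  exact: (sameop_pop h hi (po_lt w2 hxb) Ei E2).
Qed.

Theorem mainTheorem12 (alpha : seq op) :
  reduced alpha ->
  (forall i, i < size alpha ->
     ~ consecutive (fun j => corresponds alpha i j) -> fixed alpha i) /\
  (forall i j, corresponds alpha i j -> fixed alpha j -> fixed alpha i).
Proof.
move=> red; split.
  move=> i hi nc; case E: (opn alpha i) => [a|c].
    exact: (part_a_push red hi E nc).
  exact: (part_a_pop red hi E nc).
move=> i j; exact: part_b.
Qed.
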